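(* Let $n\ge 1$ and $u,v\in\mathsf{Tr}(n)$. Then $v$ covers $u$ in the poset $(\mathsf{Tr}(n),\preccurlyeq)$ if and only if $u\preccurlyeq v$, there is exactly one index $i$ with $u_i<v_i$, and every $w\in\mathsf{Tr}(n)$ with $u\preccurlyeq w\preccurlyeq v$ satisfies $w=u$ or $w=v$. In particular, two triwords in a covering relation differ in exactly one letter.
   Context: A triword of size $n$ is a word $u=u_1\cdots u_n$ with $u_i\in\{0,1,2\}$, $u_1\ne 2$, and such that $u_i=0$ implies $u_j\neq 1$ for all $j>i$; $\mathsf{Tr}(n)$ denotes their set. The order $\preccurlyeq$ on $\mathsf{Tr}(n)$ is the componentwise order: $u\preccurlyeq v$ iff $u_i\le v_i$ for all $i\in[n]$. *)

(* Defs.v *)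
From mathcomp Require Import all_boot.
Set Implicit Arguments. Unset Strict Implicit. Unset Printing Implicit Defensive.

(* A word of size n over the alphabet {0,1,2}; letter u_{i+1} is [u i], i : 'I_n. *)
Definition word (n : nat) := {ffun 'I_n -> 'I_3}.

Definition is_triword (n : nat) (u : word n) : bool :=
  [forall i : 'I_n, (val i == 0) ==> (val (u i) != 2)] &&
  [forall i : 'I_n, forall j : 'I_n,
     ((val i < val j) && (val (u i) == 0)) ==> (val (u j) != 1)].

Definition tri_le (n : nat) (u v : word n) : bool :=
  [forall i : 'I_n, val (u i) <= val (v i)].

Definition covers (n : nat) (u v : word n) : Prop :=
  [/\ is_triword u, is_triword v, tri_le u v, u <> v &
      ~ (exists w : word n, [/\ is_triword w, tri_le u w, tri_le w v, w <> u & w <> v])].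

(* Main.v *)
Require Import Defs.
From mathcomp Require Import all_boot.
From mathcomp Require Import zify.

Lemma triP n (u : word n) : is_triword u <->
  (forall i : 'I_n, val i = 0 -> val (u i) <> 2) /\
  (forall i j : 'I_n, val i < val j -> val (u i) = 0 -> val (u j) <> 1).
Proof.
split.
- case/andP=> /forallP h1 /forallP h2; split.
  + by move=> i hi; move/implyP: (h1 i); rewrite hi eqxx => /(_ isT) /eqP.
  + move=> i j hij hui; move/forallP: (h2 i) => /(_ j) /implyP.
    by rewrite hij hui eqxx => /(_ isT) /eqP.
- case=> h1 h2; rewrite /is_triword; apply/andP; split; apply/forallP=> i.
  + by apply/implyP=> /eqP hi; apply/eqP; apply: h1.
  + apply/forallP=> j; apply/implyP=> /andP [hij /eqP hui]; apply/eqP; exact: (h2 i j).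
Qed.

Lemma leP' n (u v : word n) : tri_le u v <-> forall i, val (u i) <= val (v i).
Proof. by split; [move/forallP | move=> h; apply/forallP]. Qed.

Lemma key n (u v : word n) (i : 'I_n) : is_triword u -> is_triword v ->
  tri_le u v -> val (u i) < val (v i) ->
  (forall j : 'I_n, val i < val j -> val (u j) = val (v j)) ->
  is_triword [ffun j => if j == i then u i else v j].
Proof.
move=> /triP [u1 u2] /triP [v1 v2] /leP' le hi hmax; apply/triP; split.
- move=> a ha; rewrite ffunE; case: eqP => [e|_]; [by rewrite -e; exact: (u1 a ha) | exact: (v1 a ha)].
- move=> a b hab; rewrite !ffunE.
  case: (eqVneq a i) => [ea|nai]; case: (eqVneq b i) => [eb|nbi]; try subst a; try subst b.
  + lia.
  + move=> h0 h1. have := hmax b hab. have := u2 _ _ hab h0. lia.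
  + move=> h0 h1. have := le a. have := u2 _ _ hab. lia.
  + exact: v2.
Qed.

Theorem proposition1p3 (n : nat) (hn : 1 <= n) (u v : word n)
  (hu : is_triword u) (hv : is_triword v) :
  (covers u v <->
    [/\ tri_le u v,
        #|[set i : 'I_n | val (u i) < val (v i)]| = 1 &
        forall w : word n, is_triword w -> tri_le u w -> tri_le w v ->
          w = u \/ w = v])
  /\ (covers u v -> #|[set i : 'I_n | u i != v i]| = 1).
Proof.
have eqD : tri_le u v -> [set i : 'I_n | u i != v i] = [set i : 'I_n | val (u i) < val (v i)].
  move=> /leP' le; apply/setP=> i; rewrite !inE ltn_neqAle le andbT.
  by rewrite -val_eqE.
have fwd : covers u v -> #|[set i : 'I_n | val (u i) < val (v i)]| = 1.
  case=> _ _ le neq nomid.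
  set D := [set i : 'I_n | val (u i) < val (v i)].
  have [i0 i0D] : exists i0, i0 \in D.
    apply/existsP; apply: contraT; rewrite negb_exists => /forallP hD.
    exfalso; apply: neq; apply/ffunP=> i; apply/val_inj/eqP.
    move: (hD i); rewrite inE -leqNgt => h; rewrite eqn_leq h.
    by move/leP': le => ->.
  case: (arg_maxnP (fun i : 'I_n => val i) i0D) => i iD imax.
  case: (eqVneq #|D| 1) => // hcard; exfalso.
  have : 1 < #|D| by rewrite ltn_neqAle eq_sym hcard /=; apply/card_gt0P; exists i.
  case/card_gt1P=> [a [b [aD bD ab]]].
  have [j [jD ji]] : exists j, j \in D /\ j != i.
    case: (eqVneq a i) => [ea|]; last by exists a.
    by exists b; split => //; rewrite -ea eq_sym.
  have hmx : forall j : 'I_n, val i < val j -> val (u j) = val (v j).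
    move=> k hk; apply/eqP; rewrite eqn_leq; move/leP': le => -> /=.
    rewrite leqNgt; apply/negP=> hkD.
    have /imax : k \in D by rewrite inE. by rewrite /= leqNgt hk.
  have : i \in D := iD. rewrite inE => {}iD.
  apply: nomid; exists [ffun k => if k == i then u i else v k]; split.
  - exact: key.
  - apply/leP'=> k; rewrite ffunE; case: eqP => [->//|_]; by move/leP': le.
  - apply/leP'=> k; rewrite ffunE; case: eqP => [->|_] //; by move/leP': le => ->.
  - move/ffunP/(_ j); rewrite ffunE (negbTE ji) => e.
    by move: jD; rewrite inE e ltnn.
  - move/ffunP/(_ i); rewrite ffunE eqxx => e.
    by move: iD; rewrite e ltnn.
split; last by move=> c; rewrite eqD ?fwd //; case: c.
split.
- move=> c; split; [by case: c | exact: fwd |].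
  case: c => _ _ le neq nomid w hw uw wv.
  case: (eqVneq w u) => [->|wu]; first by left.
  case: (eqVneq w v) => [->|wv']; first by right.
  by exfalso; apply: nomid; exists w; split => //; apply/eqP.
- case=> le card mid; split => //.
  + move=> e; move: card; rewrite e.
    have -> : [set i : 'I_n | val (v i) < val (v i)] = set0.
      by apply/setP=> i; rewrite !inE ltnn.
    by rewrite cards0.
  + case=> w [hw uw wv nu nv]; by case: (mid w hw uw wv).
Qed.
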